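(* Let $f:\mathbb{R}^d\times\mathcal{X}\to\mathbb{R}$ be differentiable in $\theta$, with $\mathcal{X}$ a subset of a Euclidean space and $\sup_{x\in\mathcal{X}}\Vert x\Vert\le D<\infty$. Assume (A1): there are $K_1,K_2>0$ with $\Vert\nabla f(\theta,x)-\nabla f(\hat\theta,\hat x)\Vert\le K_1\Vert\theta-\hat\theta\Vert+K_2\Vert x-\hat x\Vert(\Vert\theta\Vert+\Vert\hat\theta\Vert+1)$ for all $\theta,\hat\theta\in\mathbb{R}^d$, $x,\hat x\in\mathcal{X}$; (A3): there are $m>0$, $K>0$ with $\langle\nabla f(\theta_1,x)-\nabla f(\theta_2,x),\theta_1-\theta_2\rangle\ge m\Vert\theta_1-\theta_2\Vert^2-K$ for all $\theta_1,\theta_2,x$; (N): $(\xi_k)_{k\ge1}$ are i.i.d. random vectors in $\mathbb{R}^d$, independent of the minibatches, with a continuous everywhere-positive density, $\mathbb{E}\xi_1=0$ and $\sigma^2:=\mathbb{E}\Vert\xi_1\Vert^2<\infty$. Let $\hat x_1,\dots,\hat x_n\in\mathcal{X}$, $b\in\{1,\dots,n\}$, $(\Omega_k)$ i.i.d. uniformly random $b$-subsets of $\{1,\dots,n\}$, and let $\hat P$ be the transition kernel of $\hat\theta_k=\hat\theta_{k-1}-\frac\eta b\sum_{i\in\Omega_k}\nabla f(\hat\theta_{k-1},\hat x_i)+\eta\xi_k$. Let $\hat\theta_*$ be a minimizer of $\frac1n\sum_{i=1}^nf(\theta,\hat x_i)$ and $\hat V(\theta):=1+\Vert\theta-\hat\theta_*\Vert^2$.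 If $\eta<\min\left\{\frac1m,\frac{m}{K_1^2+64D^2K_2^2}\right\}$, then for all $\theta\in\mathbb{R}^d$, $$(\hat P\hat V)(\theta)\le(1-m\eta)\hat V(\theta)+2m\eta-\eta^2K_1^2-56\eta^2D^2K_2^2+64\eta^2D^2K_2^2\Vert\hat\theta_*\Vert^2+2\eta K+\eta^2\sigma^2.$$
   Context: $(\hat P\hat V)(\theta)=\mathbb{E}[\hat V(\hat\theta_1)\mid\hat\theta_0=\theta]$. *)

(* Defs.v *)
From HB Require Import structures.
From mathcomp Require Import all_boot all_order all_algebra.
From mathcomp Require Import all_classical all_reals all_analysis.
Set Implicit Arguments. Unset Strict Implicit. Unset Printing Implicit Defensive.
Import Order.TTheory GRing.Theory Num.Theory.
Import numFieldNormedType.Exports.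
Local Open Scope classical_set_scope.
Local Open Scope ring_scope.

Definition edot (R : realType) (d : nat) (u v : 'rV[R]_d) : R :=
  \sum_(i < d) u ord0 i * v ord0 i.
Definition enorm (R : realType) (d : nat) (u : 'rV[R]_d) : R :=
  Num.sqrt (edot u u).

Definition grad (R : realType) (d : nat) (g : 'rV[R]_d -> R) (t : 'rV[R]_d)
  : 'rV[R]_d := \row_(i < d) ('D_(delta_mx ord0 i) g t).

(* Iterated Lebesgue integral over R^k of a function of k real coordinates
   (the coordinates are passed as a list, first coordinate first). *)
Fixpoint iter_lint (R : realType) (k : nat) (g : seq R -> \bar R) : \bar R :=
  match k with
  | 0 => g [::]
  | k'.+1 => (\int[@lebesgue_measure R]_x iter_lint k' (fun s => g (x :: s)))%E
  end.

Definition row_of_seq (R : realType) (d : nat) (s : seq R) : 'rV[R]_d :=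
  \row_(i < d) nth 0 s i.

Definition box (R : realType) (d : nat) (a c : 'rV[R]_d) : set 'rV[R]_d :=
  [set v | forall i : 'I_d, a ord0 i < v ord0 i <= c ord0 i].

(* The random vector xi : T -> R^d has density p w.r.t. Lebesgue measure on
   R^d: its law agrees with p(x) dx on all boxes (which generate the Borel
   sigma-algebra of R^d). *)
Definition has_density (R : realType) (dT : measure_display)
  (T : measurableType dT) (P : probability T R) (d : nat)
  (xi : T -> 'rV[R]_d) (p : 'rV[R]_d -> R) : Prop :=
  forall a c : 'rV[R]_d,
    P (xi @^-1` box a c) =
    iter_lint d (fun s => ((\1_(box a c) (row_of_seq d s) : R)
                           * p (row_of_seq d s))%:E).

Definition sgld_step (R : realType) (d p n : nat)
  (f : 'rV[R]_d -> 'rV[R]_p -> R) (xh : 'I_n -> 'rV[R]_p) (b : nat) (eta : R)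
  (S : {set 'I_n}) (z : 'rV[R]_d) (theta : 'rV[R]_d) : 'rV[R]_d :=
  theta - (eta / b%:R) *: (\sum_(i in S) grad (fun t => f t (xh i)) theta)
        + eta *: z.

(* Transition kernel applied to V:
   (P V)(theta) = E[ V(theta_1) | theta_0 = theta ], where the minibatch
   Omega_1 is uniform over the b-subsets of {1..n} and independent of the
   noise xi_1 (whose law is that of xi under P). *)
Definition kernel_apply (R : realType) (dT : measure_display)
  (T : measurableType dT) (P : probability T R) (d p n : nat)
  (f : 'rV[R]_d -> 'rV[R]_p -> R) (xh : 'I_n -> 'rV[R]_p) (b : nat) (eta : R)
  (xi : T -> 'rV[R]_d) (V : 'rV[R]_d -> R) (theta : 'rV[R]_d) : \bar R :=
  ((#|[set S : {set 'I_n} | #|S| == b]|%:R : R)^-1%:E *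
   \sum_(S : {set 'I_n} | #|S| == b)
      \int[P]_w (V (sgld_step f xh b eta S (xi w) theta))%:E)%E.

(* Main.v *)
Require Import Defs.
From HB Require Import structures.
From mathcomp Require Import all_boot all_order all_algebra.
From mathcomp Require Import all_classical all_reals all_analysis.
From mathcomp Require Import ring lra.
From mathcomp Require Import perm.
Import numFieldNormedType.Exports.
Import Order.TTheory GRing.Theory Num.Theory.
Import numFieldNormedType.Exports.
Local Open Scope classical_set_scope.
Local Open Scope ring_scope.
Set Implicit Arguments. Unset Strict Implicit.

Section E.
Variables (R : realType) (d : nat).
Implicit Types u v w : 'rV[R]_d.

Lemma edotC u v : edot u v = edot v u.
Proof. by apply: eq_bigr => i _; rewrite mulrC. Qed.
Lemma edotDl u v w : edot (u + v) w = edot u w + edot v w.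
Proof. by rewrite /edot -big_split; apply: eq_bigr => i _; rewrite mxE mulrDl. Qed.
Lemma edotZl k u w : edot (k *: u) w = k * edot u w.
Proof. by rewrite /edot mulr_sumr; apply: eq_bigr => i _; rewrite mxE mulrA. Qed.
Lemma edotNl u w : edot (- u) w = - edot u w.
Proof. by rewrite -scaleN1r edotZl mulN1r. Qed.
Lemma edotBl u v w : edot (u - v) w = edot u w - edot v w.
Proof. by rewrite edotDl edotNl. Qed.
Lemma edot0l w : edot 0 w = 0.
Proof. by rewrite /edot big1 // => i _; rewrite mxE mul0r. Qed.
Lemma edotDr u v w : edot w (u + v) = edot w u + edot w v.
Proof. by rewrite !(edotC w) edotDl. Qed.
Lemma edotZr k u w : edot w (k *: u) = k * edot w u.
Proof. by rewrite !(edotC w) edotZl. Qed.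
Lemma edotBr u v w : edot w (u - v) = edot w u - edot w v.
Proof. by rewrite !(edotC w) edotBl. Qed.
Lemma edot_suml (I : finType) (A : {pred I}) (F : I -> 'rV[R]_d) w :
  edot (\sum_(i in A) F i) w = \sum_(i in A) edot (F i) w.
Proof. exact: (big_morph (fun u => edot u w) (fun x y => edotDl x y w) (edot0l w)). Qed.
Lemma edot_ge0 u : 0 <= edot u u.
Proof. by apply: sumr_ge0 => i _; rewrite -expr2 sqr_ge0. Qed.
Lemma enorm_ge0 u : 0 <= enorm u.
Proof. exact: sqrtr_ge0. Qed.
Lemma enorm_sq u : enorm u ^+ 2 = edot u u.
Proof. by rewrite /enorm sqr_sqrtr // edot_ge0. Qed.
Lemma edot_eq0 u v : edot u u = 0 -> edot u v = 0.
Proof.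
move=> /eqP; rewrite psumr_eq0 => [/allP H|i _]; last by rewrite -expr2 sqr_ge0.
rewrite /edot big1 // => i _.
have := H i (mem_index_enum _); rewrite mulf_eq0 orbb => /eqP ->; by rewrite mul0r.
Qed.
Lemma CS u v : edot u v <= enorm u * enorm v.
Proof.
set a := enorm u; set c := enorm v.
have a0 : 0 <= a by exact: enorm_ge0.
have c0 : 0 <= c by exact: enorm_ge0.
have H := edot_ge0 (c *: u - a *: v).
rewrite !(edotBl, edotBr, edotZl, edotZr) -!enorm_sq -/a -/c (edotC v u) in H.
have [ac0|] := eqVneq (a * c) 0.
  move: ac0 => /eqP; rewrite mulf_eq0 => /orP[]/eqP a00.
    have uu : edot u u = 0 by rewrite -enorm_sq -/a a00 expr0n.
    by rewrite edot_eq0 // a00 mul0r.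
  have vv : edot v v = 0 by rewrite -enorm_sq -/c a00 expr0n.
  by rewrite edotC edot_eq0 // a00 mulr0.
move=> acn0.
have ac : 0 < a * c by rewrite lt_def acn0 mulr_ge0.
have : 0 <= (a * c) * (a * c - edot u v) by nra.
by rewrite pmulr_rge0 // subr_ge0.
Qed.
Lemma enormD u v : enorm (u + v) <= enorm u + enorm v.
Proof.
rewrite {1}/enorm -(@ger0_norm _ (enorm u + enorm v)); last by rewrite addr_ge0 // enorm_ge0.
rewrite -sqrtr_sqr ler_sqrt; last by rewrite sqr_ge0.
rewrite edotDl !edotDr (edotC v u) -!enorm_sq.
have := CS u v; nra.
Qed.
Lemma enormZ k u : enorm (k *: u) = `|k| * enorm u.
Proof.
by rewrite /enorm edotZl edotZr mulrA -expr2 sqrtrM ?sqr_ge0 // sqrtr_sqr.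
Qed.
Lemma enormN u : enorm (- u) = enorm u.
Proof. by rewrite -scaleN1r enormZ normrN1 mul1r. Qed.
Lemma enormB u v : enorm (u - v) = enorm (v - u).
Proof. by rewrite -enormN opprB. Qed.
Lemma enorm0 : enorm (0 : 'rV[R]_d) = 0.
Proof. by rewrite /enorm edot0l sqrtr0. Qed.
Lemma enorm_sum (I : finType) (A : {pred I}) (F : I -> 'rV[R]_d) :
  enorm (\sum_(i in A) F i) <= \sum_(i in A) enorm (F i).
Proof.
elim/big_rec2: _; first by rewrite enorm0.
move=> i y1 y2 _ H; apply: le_trans (enormD _ _) _; exact: lerD.
Qed.
Lemma enorm_avg (I : finType) (A : {pred I}) (F : I -> 'rV[R]_d) (C : R) :
  (0 < #|A|)%N -> (forall i, i \in A -> enorm (F i) <= C) ->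
  enorm ((#|A|%:R)^-1 *: \sum_(i in A) F i) <= C.
Proof.
move=> A0 H; rewrite enormZ ger0_norm ?invr_ge0 // ler_pdivrMl ?ltr0n //.
apply: le_trans (enorm_sum _ _) _.
apply: le_trans (ler_sum _ H) _.
by rewrite sumr_const mulr_natl.
Qed.
Lemma avg_ge (I : finType) (A : {pred I}) (F : I -> R) (C : R) :
  (0 < #|A|)%N -> (forall i, i \in A -> C <= F i) ->
  C <= (#|A|%:R)^-1 * \sum_(i in A) F i.
Proof.
move=> A0 H; rewrite ler_pdivlMl ?ltr0n //.
apply: le_trans _ (ler_sum _ H).
by rewrite sumr_const mulr_natl.
Qed.
Lemma enorm_avg_dev (I : finType) (A : {pred I}) (w : I -> 'rV[R]_d) (v : 'rV[R]_d)
  (k : nat) (C : R) :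
  #|A| = k -> (0 < k)%N -> (forall i, i \in A -> enorm (w i - v) <= C) ->
  enorm ((k%:R)^-1 *: \sum_(i in A) w i - v) <= C.
Proof.
move=> Ak k0 H.
have -> : (k%:R)^-1 *: \sum_(i in A) w i - v = (k%:R)^-1 *: \sum_(i in A) (w i - v).
  rewrite sumrB sumr_const Ak -[v *+ k]scaler_nat scalerBr scalerA mulVf ?scale1r //.
  by rewrite pnatr_eq0 -lt0n.
rewrite -Ak; apply: enorm_avg => //; by rewrite Ak.
Qed.
Lemma enorm_avg_devT (n : nat) (w : 'I_n -> 'rV[R]_d) (v : 'rV[R]_d) (C : R) :
  (0 < n)%N -> (forall i, enorm (w i - v) <= C) ->
  enorm ((n%:R)^-1 *: \sum_(i < n) w i - v) <= C.
Proof.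
move=> n0 H; apply: (@enorm_avg_dev _ 'I_n) => //; first by rewrite card_ord.
Qed.
Lemma enorm_avgT (n : nat) (w : 'I_n -> 'rV[R]_d) (C : R) :
  (0 < n)%N -> (forall i, enorm (w i) <= C) ->
  enorm ((n%:R)^-1 *: \sum_(i < n) w i) <= C.
Proof.
move=> n0 H; have := @enorm_avg _ 'I_n w C; rewrite card_ord; apply => //.
Qed.
Lemma avg_geT (n : nat) (F : 'I_n -> R) (C : R) :
  (0 < n)%N -> (forall i, C <= F i) -> C <= (n%:R)^-1 * \sum_(i < n) F i.
Proof.
move=> n0 H; have := @avg_ge _ 'I_n F C; rewrite card_ord; apply => //.
Qed.
Lemma sq_expand1 (a g : 'rV[R]_d) (k : R) :
  enorm (a - k *: g) ^+ 2 = enorm a ^+ 2 - 2 * k * edot g a + k ^+ 2 * edot g g.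
Proof.
rewrite !enorm_sq !(edotBl, edotBr, edotZl, edotZr) (edotC a g); ring.
Qed.
Lemma sq_expand2 (g h : 'rV[R]_d) :
  edot g g = enorm (g - h) ^+ 2 + 2 * edot g h - enorm h ^+ 2.
Proof.
rewrite !enorm_sq !(edotBl, edotBr) (edotC h g); ring.
Qed.
Lemma avg_lin (I : finType) (S : {pred I}) (x : I -> 'rV[R]_d) (u G : 'rV[R]_d)
  (Q e : R) (b : nat) :
  #|S| = b -> (0 < b)%N ->
  (b%:R)^-1 * \sum_(i in S) (Q + (- (2 * e * edot (x i) u) + 2 * e ^+ 2 * edot (x i) G))
  = Q - 2 * e * edot ((b%:R)^-1 *: \sum_(i in S) x i) u
      + 2 * e ^+ 2 * edot ((b%:R)^-1 *: \sum_(i in S) x i) G.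
Proof.
move=> Sb b0.
rewrite big_split sumr_const Sb /= big_split /= sumrN.
rewrite !edotZl !edot_suml -!mulr_sumr.
have bn0 : (b%:R : R) != 0 by rewrite pnatr_eq0 -lt0n.
rewrite -mulr_natl; field.
done.
Qed.
End E.

Lemma count_sym (n b : nat) (i j : 'I_n) :
  (\sum_(S : {set 'I_n} | #|S| == b) (i \in S : nat))%N =
  (\sum_(S : {set 'I_n} | #|S| == b) (j \in S : nat))%N.
Proof.
pose h (S : {set 'I_n}) := (tperm i j @: S)%SET.
have hK : cancel h h.
  move=> S; rewrite /h -imset_comp.
  rewrite (eq_imset (g := id)) ?imset_id // => x /=; exact: tpermK.
rewrite (reindex_inj (can_inj hK)) /=.
apply: eq_big => S; first by rewrite card_imset //; exact: perm_inj.
by move=> _; rewrite -{1}(tpermR i j) mem_imset //; exact: perm_inj.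
Qed.

Lemma cardN (n b : nat) :
  #|[set S : {set 'I_n} | #|S| == b]| = 'C(n, b).
Proof.
rewrite -[in RHS](card_ord n) -card_draws; apply: eq_card => S.
rewrite inE; apply/idP/idP.
  by rewrite in_setE.
by move=> H; rewrite in_setE.
Qed.

Lemma avg_subsets (R : realType) (n b : nat) (phi : 'I_n -> R) : (1 <= b <= n)%N ->
  (#|[set S : {set 'I_n} | #|S| == b]|%:R)^-1 *
    \sum_(S : {set 'I_n} | #|S| == b) ((b%:R)^-1 * \sum_(i in S) phi i)
  = (n%:R)^-1 * \sum_i phi i.
Proof.
move=> /andP[b1 bn].
have n0 : (0 < n)%N by apply: leq_trans bn.
set N := #|_|.
have N0 : (0 < N)%N by rewrite /N cardN bin_gt0.
pose i0 := Ordinal n0.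
pose c (i : 'I_n) := (\sum_(S : {set 'I_n} | #|S| == b) (i \in S : nat))%N.
have csum : (\sum_i c i = b * N)%N.
  rewrite /c exchange_big /=.
  transitivity (\sum_(S in [set S : {set 'I_n} | #|S| == b]%SET) b)%N.
    apply: eq_big => S; first by rewrite inE.
    move=> /eqP <-; rewrite -sum1_card [RHS]big_mkcond /=.
    by apply: eq_bigr => i _; case: (i \in S).
  by rewrite sum_nat_const mulnC /N cardN card_draws card_ord.
have ci0 : (n * c i0 = b * N)%N.
  rewrite -csum (eq_bigr (fun _ => c i0)); last by move=> i _; exact: count_sym.
  by rewrite sum_nat_const card_ord.
have E : \sum_(S : {set 'I_n} | #|S| == b) ((b%:R)^-1 * \sum_(i in S) phi i)
       = (b%:R)^-1 * ((c i0)%:R * \sum_i phi i).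
  rewrite -mulr_sumr; congr (_ * _).
  transitivity (\sum_(S : {set 'I_n} | #|S| == b) \sum_i ((i \in S)%:R * phi i)).
    apply: eq_bigr => S _; rewrite big_mkcond /=.
    by apply: eq_bigr => i _; case: (i \in S); rewrite ?mul1r ?mul0r.
  rewrite exchange_big /= mulr_sumr; apply: eq_bigr => i _.
  rewrite -mulr_suml -natr_sum; congr (_ * _).
  by congr (_%:R); exact: (count_sym b i i0).
rewrite E.
have cR : (c i0)%:R = (b%:R * N%:R) / n%:R :> R.
  by rewrite -natrM -ci0 natrM mulrC mulKf // pnatr_eq0 -lt0n.
rewrite cR; field.
by rewrite !pnatr_eq0 -!lt0n b1 N0 n0.
Qed.

Lemma grad_min_zero (R : realType) d p n (f : 'rV[R]_d -> 'rV[R]_p -> R)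
  (xh : 'I_n -> 'rV[R]_p) (ts : 'rV[R]_d) :
  (forall x t, differentiable (fun s => f s x) t) ->
  (forall t, \sum_(i < n) f ts (xh i) <= \sum_(i < n) f t (xh i)) ->
  \sum_(i < n) grad (fun s => f s (xh i)) ts = 0.
Proof.
move=> fdiff fmin.
apply/rowP => j; rewrite summxE !mxE.
under eq_bigr do rewrite mxE.
set v : 'rV[R]_d := delta_mx ord0 j.
rewrite -derive_sum; last by move=> i; exact: diff_derivable.
set F := \sum_(i < n) _.
have FE : forall t, F t = \sum_(i < n) f t (xh i) by move=> t; rewrite /F fct_sumE.
have Fd : forall y, derivable F y v.
  move=> y; apply: derivable_sum => i; exact: diff_derivable.
pose h := fun x : R => F (x *: v + ts).
have Hd : forall x : R, (fun e : R => e^-1 *: ((h \o shift x) (e *: 1) - h x)) =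
   (fun e : R => e^-1 *: ((F \o shift (x *: v + ts)) (e *: v) - F (x *: v + ts))).
  move=> x; apply: funext => e; rewrite /h /= scalerDl addrA.
  by congr (_ *: (F (_ *: _ + _ + _) - _)); rewrite /GRing.scale /= mulr1.
have hd : forall x, derivable h x 1 by move=> x; rewrite /derivable Hd; exact: Fd.
have Dh : 'D_1 h 0 = 'D_v F ts by rewrite /derive Hd scale0r add0r.
rewrite -Dh.
have := @derive1_at_min R h (-1) 1 0.
have H1 : (-1 : R) <= 1 by rewrite (le_trans (lerN10 _)) ?ler01.
have H3 : (0 : R) \in `]-1, 1[ by rewrite in_itv /= (ltrN10 _) ltr01.
have H4 : forall t, t \in `]-1, 1[ -> h 0 <= h t.
  by move=> t _; rewrite /h !FE scale0r add0r; exact: fmin.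
move=> H; have := H H1 (fun t _ => hd t) H3 H4.
by move=> HH; rewrite derive_val.
Qed.

Lemma exp_sq (R : realType) (dT : measure_display) (T : measurableType dT)
  (P : probability T R) d (xi : T -> 'rV[R]_d) (eta : R) (a : 'rV[R]_d) :
  (forall i : 'I_d, P.-integrable setT (fun w => (xi w ord0 i)%:E)) ->
  (forall i : 'I_d, (\int[P]_w (xi w ord0 i)%:E = 0)%E) ->
  P.-integrable setT (fun w => (enorm (xi w) ^+ 2)%:E) ->
  (\int[P]_w (1 + enorm (a + eta *: xi w) ^+ 2)%:E =
   (1 + enorm a ^+ 2 + eta ^+ 2 * fine (\int[P]_w (enorm (xi w) ^+ 2)%:E))%:E)%E.
Proof.
move=> xint xmean x2int.
have pw : forall w, (1 + enorm (a + eta *: xi w) ^+ 2)%:E =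
   ((cst (1 + enorm a ^+ 2)%:E) w +
    \sum_(i < d) ((2 * eta * a ord0 i)%:E * (xi w ord0 i)%:E) +
    (eta ^+ 2)%:E * (enorm (xi w) ^+ 2)%:E)%E.
  move=> w; under eq_bigr do rewrite -EFinM.
  rewrite /= sumEFin -!EFinM -!EFinD; congr (_%:E).
  rewrite !enorm_sq !(edotDl, edotDr, edotZl, edotZr) (edotC (xi w) a).
  have -> : \sum_(i < d) 2 * eta * a ord0 i * xi w ord0 i = 2 * eta * edot a (xi w).
    by rewrite /edot mulr_sumr; apply: eq_bigr => i _; rewrite mulrA.
  ring.
have ic : P.-integrable setT (cst (1 + enorm a ^+ 2)%:E).
  exact: (finite_measure_integrable_cst _ (1 + enorm a ^+ 2)).
have isum : P.-integrable setT (fun w => \sum_(i < d) ((2 * eta * a ord0 i)%:E * (xi w ord0 i)%:E))%E.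
  apply: (integrable_sum measurableT) => i _; exact: (integrableZl measurableT).
have i2 : P.-integrable setT (fun w => (eta ^+ 2)%:E * (enorm (xi w) ^+ 2)%:E)%E.
  exact: (integrableZl measurableT).
under eq_integral do rewrite pw.
rewrite (integralD measurableT); [|exact: integrableD|exact: i2].
have P1 : (P [set: T] = 1)%E by apply: probability_setT.
rewrite (integralD measurableT ic isum) integral_cst //.
rewrite [X in ((_ * X) + _ + _)%E](_ : _ = 1%E); last exact: probability_setT.
rewrite mule1.
rewrite (integral_sum measurableT); last by move=> i; exact: (integrableZl measurableT).
under eq_bigr do rewrite (integralZl measurableT) // xmean mule0.
rewrite big1_eq adde0 (integralZl measurableT) //.
have fin : (\int[P]_w (enorm (xi w) ^+ 2)%:E)%E \is a fin_num.
  by apply: integrable_fin_num.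
by rewrite -{1}(fineK fin) -EFinM -EFinD.
Qed.

Lemma final_ineq (R : realFieldType) (r s eta m K K1 K2 D g G2 Cc sig : R) :
  0 <= r -> 0 <= s -> 0 < eta -> 0 <= D -> 0 <= K2 ->
  m * r ^+ 2 - K <= g -> G2 <= K1 ^+ 2 * r ^+ 2 ->
  0 <= Cc -> Cc <= 2 * D * K2 * (2 * (r + s) + 1) ->
  eta * (K1 ^+ 2 + 64 * D ^+ 2 * K2 ^+ 2) < m ->
  1 + r ^+ 2 + eta ^+ 2 * G2 + eta ^+ 2 * Cc ^+ 2 - 2 * eta * g + eta ^+ 2 * sig
  <= (1 - m * eta) * (1 + r ^+ 2) + 2 * m * eta - eta ^+ 2 * K1 ^+ 2
         - 56 * eta ^+ 2 * D ^+ 2 * K2 ^+ 2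
         + 64 * eta ^+ 2 * D ^+ 2 * K2 ^+ 2 * s ^+ 2
         + 2 * eta * K + eta ^+ 2 * sig.
Proof.
move=> r0 s0 e0 D0 K20 hg hG C0 hC hm.
set E := D ^+ 2 * K2 ^+ 2.
have E0 : 0 <= E by rewrite /E mulr_ge0 // sqr_ge0.
have h1 : - 2 * eta * g <= - 2 * eta * (m * r ^+ 2 - K).
  have : 0 <= eta * (g - (m * r ^+ 2 - K)) by rewrite mulr_ge0 ?subr_ge0 // ltW.
  lra.
have h2 : eta ^+ 2 * G2 <= eta ^+ 2 * (K1 ^+ 2 * r ^+ 2).
  by rewrite ler_wpM2l // sqr_ge0.
have h3 : Cc ^+ 2 <= 4 * E * (2 * r + 2 * s + 1) ^+ 2.
  have : Cc ^+ 2 <= (2 * D * K2 * (2 * (r + s) + 1)) ^+ 2.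
    by rewrite lerXn2r // ?nnegrE // (le_trans C0 hC).
  by move=> H; apply: (le_trans H); rewrite /E; rewrite le_eqVlt; apply/orP; left; apply/eqP; ring.
have h3' : eta ^+ 2 * Cc ^+ 2 <= eta ^+ 2 * (4 * E * (2 * r + 2 * s + 1) ^+ 2).
  by rewrite ler_wpM2l // sqr_ge0.
have h4 : (m * eta - eta ^+ 2 * K1 ^+ 2) * (1 + r ^+ 2) >= 64 * eta ^+ 2 * E * (1 + r ^+ 2).
  rewrite -subr_ge0 -mulrBl mulr_ge0 //; last by rewrite addr_ge0 ?sqr_ge0.
  rewrite subr_ge0 /E; have := ltW hm; move: e0; nra.
have h5 : 0 <= 16 * r ^+ 2 + 2 + 16 * s ^+ 2 - (2 * r + 2 * s + 1) ^+ 2.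
  have H : 0 <= (4 * r - 1) ^+ 2 + (4 * s - 1) ^+ 2 + 8 * (r - s) ^+ 2.
    by apply: addr_ge0; [apply: addr_ge0; exact: sqr_ge0 | apply: mulr_ge0 => //; exact: sqr_ge0].
  have Eq : 2 * (16 * r ^+ 2 + 2 + 16 * s ^+ 2 - (2 * r + 2 * s + 1) ^+ 2)
    = (4 * r - 1) ^+ 2 + (4 * s - 1) ^+ 2 + 8 * (r - s) ^+ 2 by ring.
  lra.
have h6 : 0 <= eta ^+ 2 * E * (16 * r ^+ 2 + 2 + 16 * s ^+ 2 - (2 * r + 2 * s + 1) ^+ 2).
  exact: (mulr_ge0 (mulr_ge0 (sqr_ge0 eta) E0) h5).
rewrite /E in h3' h4 h6.
lra.
Qed.

Unset Implicit Arguments.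
Set Strict Implicit.

Theorem lemmaD3 (R : realType) (d p : nat)
  (X : set 'rV[R]_p) (D : R)
  (f : 'rV[R]_d -> 'rV[R]_p -> R)
  (K1 K2 m K : R)
  (dT : measure_display) (T : measurableType dT) (P : probability T R)
  (xi : T -> 'rV[R]_d) (dens : 'rV[R]_d -> R)
  (n b : nat) (xh : 'I_n -> 'rV[R]_p)
  (thstar : 'rV[R]_d) (eta : R) :
  (* f differentiable in theta *)
  (forall (x : 'rV[R]_p) (t : 'rV[R]_d), differentiable (fun s => f s x) t) ->
  (* X bounded by D *)
  (forall x, X x -> enorm x <= D) ->
  (* (A1) *)
  0 < K1 -> 0 < K2 ->
  (forall (t th : 'rV[R]_d) (x xx : 'rV[R]_p), X x -> X xx ->
     enorm (grad (fun s => f s x) t - grad (fun s => f s xx) th)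
     <= K1 * enorm (t - th) + K2 * enorm (x - xx) * (enorm t + enorm th + 1)) ->
  (* (A3) *)
  0 < m -> 0 < K ->
  (forall (t1 t2 : 'rV[R]_d) (x : 'rV[R]_p), X x ->
     m * enorm (t1 - t2) ^+ 2 - K
     <= edot (grad (fun s => f s x) t1 - grad (fun s => f s x) t2) (t1 - t2)) ->
  (* (N) for xi = xi_1: measurable, continuous everywhere-positive density,
     mean zero, finite second moment *)
  (forall i : 'I_d, measurable_fun setT (fun w => xi w ord0 i)) ->
  continuous dens -> (forall v, 0 < dens v) ->
  has_density P xi dens ->
  (forall i : 'I_d, P.-integrable setT (fun w => (xi w ord0 i)%:E)) ->
  (forall i : 'I_d, (\int[P]_w (xi w ord0 i)%:E = 0)%E) ->
  P.-integrable setT (fun w => (enorm (xi w) ^+ 2)%:E) ->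
  (* data and minibatch size *)
  (forall i, X (xh i)) ->
  (1 <= b <= n)%N ->
  (* thstar minimizes the empirical risk *)
  (forall t, (n%:R)^-1 * \sum_(i < n) f thstar (xh i)
             <= (n%:R)^-1 * \sum_(i < n) f t (xh i)) ->
  (* step size *)
  0 < eta -> eta < m^-1 -> eta < m / (K1 ^+ 2 + 64 * D ^+ 2 * K2 ^+ 2) ->
  forall theta : 'rV[R]_d,
    let V := fun t : 'rV[R]_d => 1 + enorm (t - thstar) ^+ 2 in
    let sigma2 := fine (\int[P]_w (enorm (xi w) ^+ 2)%:E)%E in
    (kernel_apply P f xh b eta xi V theta
     <= ((1 - m * eta) * V theta + 2 * m * eta - eta ^+ 2 * K1 ^+ 2
         - 56 * eta ^+ 2 * D ^+ 2 * K2 ^+ 2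
         + 64 * eta ^+ 2 * D ^+ 2 * K2 ^+ 2 * enorm thstar ^+ 2
         + 2 * eta * K + eta ^+ 2 * sigma2)%:E)%E.
Proof.
move=> fdiff Xb K1p K2p A1 mp Kp A3 xmeas dcont dpos hdens xint xmean x2int xhX bb thmin
  etap eta1 eta2 theta.
cbv zeta.
set V := fun t : 'rV[R]_d => 1 + enorm (t - thstar) ^+ 2.
set sigma2 := fine _.
have /andP[b1 bn] := bb.
have n0 : (0 < n)%N by apply: leq_trans bn.
have b0 : (0 < b)%N by [].
pose gi (t : 'rV[R]_d) (i : 'I_n) := grad (fun s => f s (xh i)) t.
pose u := theta - thstar.
pose r := enorm u.
pose s := enorm thstar.
pose GF := (n%:R)^-1 *: \sum_(i < n) gi theta i.
pose gS (S : {set 'I_n}) := (b%:R)^-1 *: \sum_(i in S) gi theta i.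
pose C := 2 * D * K2 * (2 * enorm theta + 1).
pose Q := 1 + r ^+ 2 - eta ^+ 2 * enorm GF ^+ 2 + eta ^+ 2 * C ^+ 2 + eta ^+ 2 * sigma2.
pose psi (i : 'I_n) := - (2 * eta * edot (gi theta i) u) + 2 * eta ^+ 2 * edot (gi theta i) GF.
have intS : forall S : {set 'I_n},
  (\int[P]_w (V (sgld_step f xh b eta S (xi w) theta))%:E =
   (1 + enorm (u - eta *: gS S) ^+ 2 + eta ^+ 2 * sigma2)%:E)%E.
  move=> S; rewrite -(exp_sq eta (u - eta *: gS S) xint xmean x2int).
  apply: eq_integral => w _; rewrite /V /sgld_step; congr ((1 + enorm _ ^+ 2)%:E).
  rewrite /gS /u scalerA.
  by rewrite addrAC [theta - _ - thstar]addrAC.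
have fmin : forall t, \sum_(i < n) f thstar (xh i) <= \sum_(i < n) f t (xh i).
  by move=> t; have := thmin t; rewrite ler_pM2l // invr_gt0 ltr0n.
have gz : \sum_(i < n) gi thstar i = 0 := grad_min_zero fdiff fmin.
have GFe : GF = (n%:R)^-1 *: \sum_(i < n) (gi theta i - gi thstar i).
  by rewrite sumrB gz subr0.
have hGF : enorm GF <= K1 * r.
  rewrite GFe; apply: enorm_avgT => // i.
  have := A1 theta thstar (xh i) (xh i) (xhX i) (xhX i).
  by rewrite subrr enorm0 mulr0 mul0r addr0.
have hGu : m * r ^+ 2 - K <= edot GF u.
  rewrite GFe edotZl edot_suml; apply: avg_geT => // i.
  exact: (A3 theta thstar (xh i) (xhX i)).
have D0 : 0 <= D.
  by apply: le_trans (Xb _ (xhX (Ordinal n0))); exact: enorm_ge0.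
have hC0 : 0 <= C.
  rewrite /C; apply: mulr_ge0; last by rewrite addr_ge0 // mulr_ge0 // enorm_ge0.
  by rewrite !mulr_ge0 // ltW.
have hxx : forall i j, enorm (xh i - xh j) <= 2 * D.
  move=> i j; apply: le_trans (enormD _ _) _; rewrite enormN mulr2n mulrDl mul1r.
  by apply: lerD; apply: Xb.
have hgg : forall i j, enorm (gi theta i - gi theta j) <= C.
  move=> i j; have := A1 theta theta (xh i) (xh j) (xhX i) (xhX j).
  rewrite subrr enorm0 mulr0 add0r => H; apply: le_trans H _.
  have e : C = K2 * (2 * D) * (enorm theta + enorm theta + 1) by rewrite /C; ring.
  rewrite e ler_wpM2r // ?addr_ge0 ?enorm_ge0 //.
  by rewrite ler_wpM2l // ltW.
have hdev : forall S : {set 'I_n}, #|S| = b -> enorm (gS S - GF) <= C.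
  move=> S Sb; apply: enorm_avg_dev => // i _.
  rewrite enormB; apply: enorm_avg_devT => // j; exact: hgg.
have pt : forall S : {set 'I_n}, #|S| == b ->
    1 + enorm (u - eta *: gS S) ^+ 2 + eta ^+ 2 * sigma2
    <= (b%:R)^-1 * \sum_(i in S) (Q + psi i).
  move=> S /eqP Sb.
  have e1 := sq_expand1 u (gS S) eta.
  have e2 := sq_expand2 (gS S) GF.
  have e3 : (b%:R)^-1 * \sum_(i in S) (Q + psi i)
      = Q - 2 * eta * edot (gS S) u + 2 * eta ^+ 2 * edot (gS S) GF.
    exact: avg_lin.
  have hd := hdev S Sb.
  have hx : enorm (gS S - GF) ^+ 2 <= C ^+ 2.
    by rewrite lerXn2r // ?nnegrE ?enorm_ge0.
  have := ler_wpM2l (sqr_ge0 eta) hx.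
  rewrite e3 e1 e2 /Q /r; lra.
rewrite /kernel_apply.
under eq_bigr => S _ do rewrite intS.
rewrite sumEFin -EFinM lee_fin.
apply: le_trans.
  apply: ler_wpM2l; first by rewrite invr_ge0 ler0n.
  by apply: ler_sum => S HS; exact: pt.
rewrite avg_subsets //.
have e4 : (n%:R)^-1 * \sum_(i < n) (Q + psi i)
    = Q - 2 * eta * edot GF u + 2 * eta ^+ 2 * edot GF GF.
  exact: (@avg_lin _ _ _ 'I_n (gi theta) u GF Q eta n (card_ord n) n0).
rewrite e4.
have r0 : 0 <= r by exact: enorm_ge0.
have s0 : 0 <= s by exact: enorm_ge0.
have hG2 : enorm GF ^+ 2 <= K1 ^+ 2 * r ^+ 2.
  rewrite -exprMn lerXn2r // ?nnegrE ?enorm_ge0 //.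
  by rewrite mulr_ge0 // ltW.
have hCb : C <= 2 * D * K2 * (2 * (r + s) + 1).
  have h2DK : 0 <= 2 * D * K2 by rewrite !mulr_ge0 // ltW.
  rewrite /C; apply: (ler_wpM2l h2DK).
  rewrite lerD2r; apply: (@ler_wpM2l _ 2) => //.
  have -> : theta = u + thstar by rewrite /u subrK.
  exact: enormD.
have hm : eta * (K1 ^+ 2 + 64 * D ^+ 2 * K2 ^+ 2) < m.
  rewrite -ltr_pdivlMr //.
  have h1 : 0 < K1 ^+ 2 by rewrite exprn_gt0.
  have h2 : 0 <= 64 * D ^+ 2 * K2 ^+ 2.
    by apply: mulr_ge0; [apply: mulr_ge0 => //; exact: sqr_ge0 | exact: sqr_ge0].
  lra.
have hfin := final_ineq sigma2 r0 s0 etap D0 (ltW K2p) hGu hG2 hC0 hCb hm.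
apply: le_trans hfin.
rewrite /Q -enorm_sq; lra.
Qed.
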